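(* Let $d\ge2$ and, for each $N$, let $x_1,\dots,x_N\in\mathbb{R}^d$ be pairwise distinct with real charges $d_1,\dots,d_N$ (not all zero), $M_N=\sum|d_i|$, and $\mu_N=\frac1{M_N}\sum_id_i\delta_{x_i}$. Assume $$\sup_N\Big[\frac1{2M_N^2}\sum_{i=1}^N\sum_{j\ne i}|d_i||d_j|\big(g(x_i-x_j)+|F(x_i-x_j)|\big)+\frac1{M_N}\sum_{i=1}^N|d_i|V(x_i)\Big]<+\infty.$$ Then $(\mu_N)_N$ is tight.
   Context: $g(x)=-\log|x|$ ($d=2$), $g(x)=|x|^{2-d}$ ($d\ge3$). $F\in C^1(\mathbb{R}^d)$ with $F(-x)=F(x)$; $V\in C^1(\mathbb{R}^d)$ bounded from below with $\lim_{|x|\to\infty}(V(x)/2+g(x))=+\infty$. A family of signed measures is tight if for every $\varepsilon>0$ there is a compact $K$ with $\sup_N|\mu_N|(\mathbb{R}^d\setminus K)<\varepsilon$, $|\mu|$ the variation measure. *)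

(* Defs.v *)
From HB Require Import structures.
From mathcomp Require Import all_boot all_order all_algebra.
From mathcomp Require Import all_classical all_reals all_analysis.
Set Implicit Arguments. Unset Strict Implicit. Unset Printing Implicit Defensive.
Import Order.TTheory GRing.Theory Num.Theory.
Import numFieldNormedType.Exports.
Local Open Scope classical_set_scope.
Local Open Scope ring_scope.

(* Points of R^d are row vectors 'rV[R]_d (with the product topology). *)

Definition enorm (R : realType) (d : nat) (x : 'rV[R]_d) : R :=
  Num.sqrt (\sum_(i < d) x ord0 i ^+ 2).

Definition gker (R : realType) (d : nat) (x : 'rV[R]_d) : R :=
  if d == 2%N then - ln (enorm x) else (enorm x ^+ (d - 2))^-1.

Definition C1 (R : realType) (d : nat) (f : 'rV[R]_d -> R) : Prop :=
  (forall x, differentiable f x) /\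
  (forall i : 'I_d, continuous (fun x => 'D_(delta_mx ord0 i) f x)).

Definition empmeas (R : realType) (d : nat) (N : nat)
  (x : nat -> 'rV[R]_d) (q : nat -> R) (A : set 'rV[R]_d) : R :=
  (\sum_(i < N) `|q i|)^-1 * \sum_(i < N) q i * \1_A (x i).

Definition tvar (T : Type) (R : realType) (mu : set T -> R) (A : set T)
  : \bar R :=
  ereal_sup [set (\sum_(P <- s) `|mu P|)%:E | s in
    [set s : seq (set T) | (forall P, P \in s -> P `<=` A) /\
      (forall i j, (i < j < size s)%N -> nth set0 s i `&` nth set0 s j = set0)]].

Definition tight (T : topologicalType) (R : realType) (I : set nat)
  (mu : nat -> set T -> R) : Prop :=
  forall eps : R, 0 < eps -> exists K : set T, compact K /\
    (ereal_sup [set tvar (mu N) (~` K) | N in I] < eps%:E)%E.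

(* Main.v *)
Require Import Defs.
From HB Require Import structures.
From mathcomp Require Import all_boot all_order all_algebra.
From mathcomp Require Import all_classical all_reals all_analysis.
From mathcomp Require Import lra ring.
Import Order.TTheory GRing.Theory Num.Theory.
Import numFieldNormedType.Exports.
Local Open Scope classical_set_scope.
Local Open Scope ring_scope.
Set Implicit Arguments. Unset Strict Implicit. Unset Printing Implicit Defensive.
Section H.
Variable R : realType.
Variable d : nat.
Implicit Types x y : 'rV[R]_d.

Lemma enorm_ge0 x : 0 <= enorm x.
Proof. exact: sqrtr_ge0. Qed.

Lemma enorm_sqr x : enorm x ^+ 2 = \sum_(i < d) x ord0 i ^+ 2.
Proof. by rewrite sqr_sqrtr // sumr_ge0 // => i _; rewrite sqr_ge0. Qed.

Lemma enormN x : enorm (- x) = enorm x.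
Proof. by rewrite /enorm; congr Num.sqrt; apply: eq_bigr => i _; rewrite mxE sqrrN. Qed.

Lemma enorm_coord x (j : 'I_d) : `|x ord0 j| <= enorm x.
Proof.
rewrite -sqrtr_sqr /enorm ler_sqrt; last by rewrite sumr_ge0 // => i _; rewrite sqr_ge0.
by rewrite (bigD1 j) //= lerDl sumr_ge0 // => i _; rewrite sqr_ge0.
Qed.

Lemma enorm_sub x y : enorm y <= enorm x -> enorm (x - y) <= 2 * enorm x.
Proof.
move=> yx.
have h : enorm (x - y) ^+ 2 <= (2 * enorm x) ^+ 2.
  rewrite enorm_sqr.
  apply: (@le_trans _ _ (2 * enorm x ^+ 2 + 2 * enorm y ^+ 2)).
    rewrite !enorm_sqr !mulr_sumr -big_split /=; apply: ler_sum => i _.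
    rewrite !mxE; have := sqr_ge0 (x ord0 i + y ord0 i); rewrite !expr2; nra.
  have := enorm_ge0 y; have := enorm_ge0 x; nra.
rewrite -ler_sqr // ?nnegrE ?enorm_ge0 //.
by rewrite mulr_ge0 ?enorm_ge0.
Qed.

Lemma ln_enorm_sub x y : enorm y <= enorm x ->
  ln (enorm (x - y)) <= ln 2 + ln (Num.max 1 (enorm x)).
Proof.
move=> yx; have := enorm_sub yx.
have m1 : 1 <= Num.max 1 (enorm x) by rewrite le_max lexx.
have e2 : 2 * enorm x <= 2 * Num.max 1 (enorm x) by rewrite ler_pM2l // le_max lexx orbT.
rewrite -lnM ?posrE //; last by rewrite (lt_le_trans ltr01).
move=> h.
have [e0|e0] := leP (enorm (x - y)) 0.
  rewrite ln0 // ln_ge0 //; nra.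
rewrite ler_ln ?posrE //; first exact: (le_trans h e2).
nra.
Qed.

Lemma gkerE2 x : d = 2%N -> gker x = - ln (enorm x).
Proof. by rewrite /gker => d2; rewrite ifT // d2. Qed.

Lemma gkerN x : gker (- x) = gker x.
Proof. by rewrite /gker enormN. Qed.

Lemma gker_sym x y : gker (y - x) = gker (x - y).
Proof. by rewrite -opprB gkerN. Qed.

Lemma gker_ge0 x : d != 2%N -> 0 <= gker x.
Proof. by rewrite /gker => /negPf ->; rewrite invr_ge0 exprn_ge0 // enorm_ge0. Qed.

Lemma gker_le1 x : 1 <= enorm x -> gker x <= 1.
Proof.
rewrite /gker => e1; case: ifP => _.
  by rewrite lerNl (le_trans _ (ln_ge0 e1)) // lerN10.
by rewrite invf_le1 ?exprn_ege1 // exprn_gt0 // (lt_le_trans ltr01).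
Qed.

Lemma key2 x y : d = 2%N -> enorm y <= enorm x ->
  - ln 2 - ln (Num.max 1 (enorm x)) <= gker (x - y).
Proof.
move=> d2 yx; rewrite gkerE2 // -opprD lerN2; exact: ln_enorm_sub.
Qed.

Section Bounds.
Variables (V : 'rV[R]_d -> R) (m : R).
Hypothesis Vm : forall y, m <= V y.
Hypothesis HW : forall A : R, exists r : R, forall y, r < enorm y -> A < V y / 2 + gker y.

Definition hh x y := gker (x - y) + V x + V y.

Lemma hh_sym x y : hh x y = hh y x.
Proof. by rewrite /hh gker_sym; lra. Qed.

Lemma Vinf A : exists r, forall y, r < enorm y -> A <= V y.
Proof.
have [r hr] := HW (A / 2 + 1); exists (Num.max r 1) => y.
rewrite gt_max => /andP[ry y1].
have := hr _ ry; have := gker_le1 (ltW y1); lra.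
Qed.

Lemma hh_lb : exists c, forall x y, c <= hh x y.
Proof.
case: (eqVneq d 2%N) => d2; last first.
  exists (m + m) => x y; rewrite /hh.
  have := gker_ge0 (x - y) d2; have := Vm x; have := Vm y; lra.
have [r0 hr0] := HW 0.
pose R0 := Num.max 1 r0.
have R01 : 1 <= R0 by rewrite le_max lexx.
exists (Num.min (- ln 2 - ln R0 + (m + m)) (- ln 2 + (m + m / 2))).
suff H : forall x y, enorm y <= enorm x ->
    Num.min (- ln 2 - ln R0 + (m + m)) (- ln 2 + (m + m / 2)) <= hh x y.
  move=> x y; have [/H //|/ltW /H] := leP (enorm y) (enorm x).
  by rewrite hh_sym.
move=> x y yx; have k := key2 d2 yx; rewrite /hh.
have [xR|xR] := leP (enorm x) R0.
  have : ln (Num.max 1 (enorm x)) <= ln R0.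
    have hm1 : 1 <= Num.max 1 (enorm x) by rewrite le_max lexx.
    rewrite ler_ln ?posrE ?(lt_le_trans ltr01 hm1) ?(lt_le_trans ltr01 R01) //.
    by rewrite ge_max R01 xR.
  rewrite ge_min; have := Vm x; have := Vm y; lra.
have ex1 : 1 < enorm x by apply: le_lt_trans xR.
rewrite (_ : Num.max 1 (enorm x) = enorm x) in k; last by apply/max_idPr/ltW.
have r0x : r0 < enorm x by apply: le_lt_trans xR; rewrite /R0 le_max lexx orbT.
have := hr0 x r0x; rewrite gkerE2 // => h.
rewrite ge_min; apply/orP; right.
have := Vm x; have := Vm y; lra.
Qed.

Lemma hh_big A : exists r, forall x y, r < enorm x -> A <= hh x y.
Proof.
case: (eqVneq d 2%N) => d2; last first.
  have [r hr] := Vinf (A - m); exists r => x y rx; rewrite /hh.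
  have := gker_ge0 (x - y) d2; have := hr x rx; have := Vm y; lra.
have [r hr] := HW (A + ln 2 - (m + m / 2)).
exists (Num.max r 1).
suff H : forall x y, enorm y <= enorm x -> Num.max r 1 < enorm x -> A <= hh x y.
  move=> x y rx; have [yx|/ltW xy] := leP (enorm y) (enorm x); first exact: H.
  by rewrite hh_sym; apply: H => //; apply: lt_le_trans xy.
move=> x y yx; rewrite gt_max => /andP[rx x1].
have k := key2 d2 yx.
rewrite (_ : Num.max 1 (enorm x) = enorm x) in k; last by apply/max_idPr/ltW.
have := hr x rx; rewrite gkerE2 // => h; rewrite /hh.
have := Vm x; have := Vm y; lra.
Qed.

End Bounds.
End H.

Section E.
Variable R : realType.

Lemma energy_id n (a : 'I_n -> R) (G : 'I_n -> 'I_n -> R) (W : 'I_n -> R) :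
  0 < \sum_(i < n) a i ->
  (2 * (\sum_(i < n) a i) ^+ 2) *
  ((2 * (\sum_(i < n) a i) ^+ 2)^-1 *
     (\sum_(i < n) \sum_(j < n | j != i) a i * a j * G i j)
   + (\sum_(i < n) a i)^-1 * \sum_(i < n) a i * W i)
  = \sum_(i < n) \sum_(j < n) a i * a j * ((if j != i then G i j else 0) + W i + W j).
Proof.
set M := \sum_(i < n) a i => M0.
have -> : \sum_(i < n) \sum_(j < n) a i * a j * ((if j != i then G i j else 0) + W i + W j)
  = \sum_(i < n) \sum_(j < n | j != i) a i * a j * G i j
    + (\sum_(i < n) a i * W i) * M + M * \sum_(i < n) a i * W i.
  rewrite {2}/M !mulr_suml -!big_split /=; apply: eq_bigr => i _.
  rewrite (big_mkcond (fun j => j != i)) /= /M !mulr_sumr -!big_split /=.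
  apply: eq_bigr => j _.
  case: ifP => _; rewrite /=; ring.
rewrite /M; field; exact: lt0r_neq0.
Qed.

Lemma energy_lb n (a : 'I_n -> R) (L : 'I_n -> 'I_n -> R) (O : pred 'I_n) c A :
  (forall i, 0 <= a i) -> c <= A -> (forall i j, c <= L i j) ->
  (forall i j, O i -> A <= L i j) ->
  c * (\sum_(i < n) a i) ^+ 2 + (A - c) * (\sum_(i < n | O i) a i) * \sum_(i < n) a i
  <= \sum_(i < n) \sum_(j < n) a i * a j * L i j.
Proof.
move=> a0 cA Lc LA.
have step : forall i j, a i * a j * (c + (O i)%:R * (A - c)) <= a i * a j * L i j.
  move=> i j; apply: ler_wpM2l; first exact: mulr_ge0.
  case Oi: (O i); rewrite /= ?mul1r ?mul0r ?addr0; last exact: Lc.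
  have := LA i j Oi; lra.
apply: le_trans (ler_sum _ (fun i _ => ler_sum _ (fun j _ => step i j))).
have -> : \sum_(i < n) \sum_(j < n) a i * a j * (c + (O i)%:R * (A - c))
    = (\sum_(i < n) a i * (c + (O i)%:R * (A - c))) * \sum_(i < n) a i.
  rewrite mulr_suml; apply: eq_bigr => i _; rewrite mulr_sumr; apply: eq_bigr => j _; ring.
have -> : \sum_(i < n) a i * (c + (O i)%:R * (A - c))
    = c * \sum_(i < n) a i + (A - c) * \sum_(i < n | O i) a i.
  rewrite [X in _ = _ + _ * X]big_mkcond /= !mulr_sumr -big_split /=; apply: eq_bigr => i _.
  case: (O i) => /=; ring.
by rewrite le_eqVlt; apply/orP; left; apply/eqP; ring.
Qed.

Lemma sum_indic_disj (T : Type) (s : seq (set T)) (y : T) :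
  (forall i j, (i < j < size s)%N -> nth set0 s i `&` nth set0 s j = set0) ->
  \sum_(P <- s) (\1_P y : R) <= 1.
Proof.
elim: s => [|P s IH] H; first by rewrite big_nil ler01.
have H' : forall i j, (i < j < size s)%N -> nth set0 s i `&` nth set0 s j = set0.
  by move=> i j ij; apply: (H i.+1 j.+1).
rewrite big_cons indicE.
have [yP|yP] := boolP (y \in P).
  rewrite big1_seq ?addr0 // => Q /andP[_ Qs].
  rewrite indicE; apply/eqP; rewrite pnatr_eq0 eqb0; apply/negP => yQ.
  have := H 0%N (index Q s).+1; rewrite /= ltnS index_mem Qs nth_index //.
  move=> /(_ isT) PQ; have : (P `&` Q) y by split; rewrite -in_setE.
  by rewrite PQ.
by rewrite add0r; apply: IH.
Qed.

Lemma sum_indic_disj_sub (T : Type) (s : seq (set T)) (A : set T) (y : T) :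
  (forall P, P \in s -> P `<=` A) ->
  (forall i j, (i < j < size s)%N -> nth set0 s i `&` nth set0 s j = set0) ->
  \sum_(P <- s) (\1_P y : R) <= \1_A y.
Proof.
move=> sA H; rewrite [X in _ <= X]indicE.
have [yA|yA] := boolP (y \in A); first exact: sum_indic_disj.
rewrite big1_seq // => Q /andP[_ Qs]; rewrite indicE; apply/eqP.
rewrite pnatr_eq0 eqb0; apply: contra yA; rewrite !in_setE; exact: sA.
Qed.
End E.

Lemma tvar_emp_le (R : realType) d N (x : nat -> 'rV[R]_d) (q : nat -> R) (A : set 'rV[R]_d) :
  0 < \sum_(i < N) `|q i| ->
  (tvar (empmeas N x q) A <=
    ((\sum_(i < N) `|q i|)^-1 * \sum_(i < N) `|q i| * \1_A (x i))%:E)%E.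
Proof.
move=> M0.
apply: ge_ereal_sup => _ [s [sA sdisj] <-]; rewrite lee_fin.
have Mi : 0 <= (\sum_(i < N) `|q i|)^-1 by rewrite invr_ge0 ltW.
apply: (@le_trans _ _ (\sum_(P <- s) ((\sum_(i < N) `|q i|)^-1 * \sum_(i < N) `|q i| * \1_P (x i)))).
  apply: ler_sum => P _; rewrite /empmeas normrM ger0_norm //.
  apply: ler_wpM2l => //; apply: (le_trans (ler_norm_sum _ _ _)).
  apply: ler_sum => i _; by rewrite normrM [X in _ * X]ger0_norm // indicE.
rewrite -mulr_sumr; apply: ler_wpM2l => //; rewrite exchange_big /=.
apply: ler_sum => i _; rewrite -mulr_sumr; apply: ler_wpM2l => //.
exact: sum_indic_disj_sub.
Qed.

Unset Implicit Arguments.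

Theorem lemma3p1 (R : realType) (d : nat) (F V : 'rV[R]_d -> R)
  (x : nat -> nat -> 'rV[R]_d) (q : nat -> nat -> R) :
  (2 <= d)%N ->
  C1 F -> (forall y, F (- y) = F y) ->
  C1 V -> (exists m : R, forall y, m <= V y) ->
  (forall A : R, exists r : R, forall y, r < enorm y -> A < V y / 2 + gker y) ->
  (* configurations: for each N >= 1, pairwise distinct points, charges not all zero *)
  (forall N i j, (i < N)%N -> (j < N)%N -> i <> j -> x N i <> x N j) ->
  (forall N, (0 < N)%N -> exists i, (i < N)%N /\ q N i <> 0) ->
  (ereal_sup [set ((2 * (\sum_(i < N) `|q N i|) ^+ 2)^-1 *
        (\sum_(i < N) \sum_(j < N | j != i)
            `|q N i| * `|q N j| * (gker (x N i - x N j) + `|F (x N i - x N j)|))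
      + (\sum_(i < N) `|q N i|)^-1 * \sum_(i < N) `|q N i| * V (x N i))%:E
      | N in [set N | (0 < N)%N]] < +oo)%E ->
  tight [set N | (0 < N)%N] (fun N => empmeas N (x N) (q N)).
Proof.
move=> _ _ _ _ [m Vm] HW _ qnz Hsup eps eps0.
set S := [set _ | _ in _] in Hsup.
have [B HB] : exists B : R, forall e, S e -> (e <= B%:E)%E.
  move: Hsup; case Es: (ereal_sup S) => [B| |] // _.
  - by exists B => e Se; rewrite -Es; exact: ereal_sup_ubound.
  - by exists 0 => e Se; have := ereal_sup_ubound Se; rewrite Es => /le_trans; apply; rewrite leNye.
have [c hc] := @hh_lb R d V m Vm HW.
pose c' := Num.min c (m + m).
have c'c : c' <= c by rewrite ge_min lexx.
have c'm : c' <= m + m by rewrite ge_min lexx orbT.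
pose D := 2 * B - c'.
pose K := 2 * (`|D| + 1) / eps.
have K0 : 0 < K by rewrite /K divr_gt0 // mulr_gt0 // ltr_pwDr.
pose A := c' + K.
have [r1 hr1] := @hh_big R d V m Vm HW A.
have [r2 hr2] := @Vinf R d V HW (A / 2).
pose r := Num.max r1 r2.
pose Kset := [set v : 'rV[R]_d | forall j : 'I_d, `[-r, r]%classic (v ord0 j)].
have out : forall v, (~` Kset) v -> r < enorm v.
  move=> v /= /existsNP [j hj]; apply: lt_le_trans (enorm_coord v j).
  rewrite ltNge; apply/negP => h; apply: hj; rewrite /= in_itv /= -ler_norml //.
exists Kset; split.
  apply: (@rV_compact _ d (fun j => `[-r, r]%classic)) => j; exact: segment_compact.
apply: (@le_lt_trans _ _ (eps / 2)%:E); last by rewrite lte_fin; lra.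
apply: ge_ereal_sup => _ [N N0 <-].
have M0 : 0 < \sum_(i < N) `|q N i|.
  have [i [iN qi]] := qnz N N0.
  rewrite (bigD1 (Ordinal iN)) //= ltr_pwDl ?normr_gt0 ?sumr_ge0 //; last by apply/eqP.
apply: le_trans (tvar_emp_le (x N) (~` Kset) M0) _; rewrite lee_fin.
have -> : \sum_(i < N) `|q N i| * \1_(~` Kset) (x N i)
    = \sum_(i < N | x N i \in ~` Kset) `|q N i|.
  rewrite [RHS]big_mkcond; apply: eq_bigr => i _; rewrite indicE.
  by case: (_ \in _); rewrite /= ?mulr1 ?mulr0.
have HE := HB _ (ex_intro2 _ _ N N0 erefl); rewrite lee_fin in HE.
have Eid := @energy_id R N (fun i => `|q N i|)
  (fun i j => gker (x N i - x N j) + `|F (x N i - x N j)|) (fun i => V (x N i)) M0.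
have Elb := @energy_lb R N (fun i => `|q N i|)
  (fun i j => (if j != i then gker (x N i - x N j) + `|F (x N i - x N j)| else 0)
     + V (x N i) + V (x N j)) (fun i => x N i \in ~` Kset) c' A.
have Lc : forall i j : 'I_N, c' <= (if j != i then gker (x N i - x N j) + `|F (x N i - x N j)| else 0)
     + V (x N i) + V (x N j).
  move=> i j; case: ifP => [_|/negbFE/eqP ->].
    have := hc (x N i) (x N j); rewrite /hh; have := normr_ge0 (F (x N i - x N j)); lra.
  have := Vm (x N i); lra.
have LA : forall i j : 'I_N, x N i \in ~` Kset -> A <= (if j != i then gker (x N i - x N j) + `|F (x N i - x N j)| else 0)
     + V (x N i) + V (x N j).
  move=> i j; rewrite in_setE => /out rx.
  have rx1 : r1 < enorm (x N i) by apply: le_lt_trans rx; rewrite le_max lexx.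
  have rx2 : r2 < enorm (x N i) by apply: le_lt_trans rx; rewrite le_max lexx orbT.
  case: ifP => [_|/negbFE/eqP ->].
    have := hr1 (x N i) (x N j) rx1; rewrite /hh.
    have := normr_ge0 (F (x N i - x N j)); lra.
  have := hr2 (x N i) rx2; lra.
have cA : c' <= A by rewrite /A lerDl ltW.
have := Elb (fun i => normr_ge0 _) cA Lc LA; rewrite -Eid.
move: HE; set E := (_ + _ * _).
set M := \sum_(i < N) `|q N i|.
set P := \sum_(i < N | _) _.
have P0 : 0 <= P by rewrite sumr_ge0.
move=> HE Hl.
have h1 : K * P * M <= D * M * M.
  have M2 : 0 <= 2 * M ^+ 2 by rewrite mulr_ge0 ?exprn_ge0 ?ltW.
  have h := ler_wpM2l M2 HE.
  have -> : D * M * M = 2 * M ^+ 2 * B - c' * M ^+ 2 by rewrite /D; ring.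
  have -> : K = A - c' by rewrite /A; ring.
  lra.
have h2 : K * P <= D * M by rewrite -(ler_pM2r M0).
have KE : K * eps = 2 * (`|D| + 1) by rewrite /K; field; exact: lt0r_neq0.
have DD : D * M <= (`|D| + 1) * M.
  by apply: ler_wpM2r; [exact: ltW | have := ler_norm D; lra].
have e1 := ler_wpM2l (ltW eps0) h2.
have e2 := ler_wpM2l (ltW eps0) DD.
have h3 : (`|D| + 1) * (2 * P) <= (`|D| + 1) * (eps * M).
  have -> : (`|D| + 1) * (2 * P) = eps * (K * P) by rewrite -[X in X * (2 * P)]/(_) ; rewrite (_ : (`|D| + 1) * (2 * P) = (K * eps) * P); [ring | rewrite KE; ring].
  lra.
have h4 : 2 * P <= eps * M by rewrite -(ler_pM2l (_ : 0 < `|D| + 1)) // ltr_pwDr.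
rewrite mulrC ler_pdivrMr //; lra.
Qed.
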